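(* Let $n,p,n_\xi\ge 1$ be integers, let $f_1,\dots,f_n:\mathbb{R}^p\to\mathbb{R}$ be continuously differentiable, and let $g=\frac1n\sum_{i=1}^n f_i$. Suppose there exists a unique $x^*\in\mathbb{R}^p$ with $\nabla g(x^* )=0$. Let $\tilde A_i\in\mathbb{R}^{n_\xi\times n_\xi}$, $\tilde B_i\in\mathbb{R}^{n_\xi\times n}$ ($i=1,\dots,n$) and $\tilde C\in\mathbb{R}^{1\times n_\xi}$, and set $A_i=\tilde A_i\otimes I_p$, $B_i=\tilde B_i\otimes I_p$, $C=\tilde C\otimes I_p$. Consider the jump system $$\xi^{k+1}=A_{i_k}\xi^k+B_{i_k}w^k,\qquad v^k=C\xi^k,\qquad w^k=\begin{bmatrix}\nabla f_1(v^k)\\ \vdots\\ \nabla f_n(v^k)\end{bmatrix},$$ where the indices $i_k$ are sampled IID from the uniform distribution on $\{1,\dots,n\}$. Let $w^*=\begin{bmatrix}\nabla f_1(x^* )^T&\cdots&\nabla f_n(x^* )^T\end{bmatrix}^T$ and let $\xi^*\in\mathbb{R}^{n_\xi p}$ satisfy $\xi^*=A_i\xi^*+B_iw^*$ for all $i\in\{1,\dots,n\}$ and $C\xi^*=x^*$. Assume that for some prescribed scalars $\nu,\gamma$ and $L$, for all $x\in\mathbb{R}^p$ and all $i$, $$\begin{bmatrix} x-x^*\\ \frac1n\sum_{j=1}^n\nabla f_j(x)-\frac1n\sum_{j=1}^n\nabla f_j(x^* )\end{bmatrix}^T\begin{bmatrix}2L\nu I_p&(L-\nu)I_p\\(L-\nu)I_p&-2I_p\end{bmatrix}\begin{bmatrix}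 x-x^*\\ \frac1n\sum_{j=1}^n\nabla f_j(x)-\frac1n\sum_{j=1}^n\nabla f_j(x^* )\end{bmatrix}\ge0,$$ $$\begin{bmatrix} x-x^*\\ \nabla f_i(x)-\nabla f_i(x^* )\end{bmatrix}^T\begin{bmatrix}2L\gamma I_p&(L-\gamma)I_p\\(L-\gamma)I_p&-2I_p\end{bmatrix}\begin{bmatrix} x-x^*\\ \nabla f_i(x)-\nabla f_i(x^* )\end{bmatrix}\ge0.$$ Define $\tilde D_{\psi1}=\begin{bmatrix}L&\nu&L&\gamma&\cdots&L&\gamma\end{bmatrix}^T\in\mathbb{R}^{2n+2}$ (the pair $L,\gamma$ repeated $n$ times) and $\tilde D_{\psi2}=\begin{bmatrix}-\frac1n e&\frac1n e&-e_1&e_1&\cdots&-e_n&e_n\end{bmatrix}^T\in\mathbb{R}^{(2n+2)\times n}$. If, for a given scalar $\rho$, there exist a symmetric matrix $\tilde P\in\mathbb{R}^{n_\xi\times n_\xi}$ with $\tilde P>0$ and nonnegative scalars $\lambda_1,\lambda_2$ such that $$\begin{bmatrix}\frac1n\sum_{i=1}^n\tilde A_i^T\tilde P\tilde A_i-\rho^2\tilde P&\frac1n\sum_{i=1}^n\tilde A_i^T\tilde P\tilde B_i\\ \frac1n\sum_{i=1}^n\tilde B_i^T\tilde P\tilde A_i&\frac1n\sum_{i=1}^n\tilde B_i^T\tilde P\tilde B_i\end{bmatrix}+\begin{bmatrix}\tilde C^T\tilde D_{\psi1}^T\\ \tilde D_{\psi2}^T\end{bmatrix}\left(\begin{bmatrix}\lambda_1&\tilde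 0^T\\ \tilde 0&\frac{\lambda_2}{n}I_n\end{bmatrix}\otimes\begin{bmatrix}0&1\\1&0\end{bmatrix}\right)\begin{bmatrix}\tilde D_{\psi1}\tilde C&\tilde D_{\psi2}\end{bmatrix}\le0,$$ then for all $k\ge1$ and all $\xi^0\in\mathbb{R}^{n_\xi p}$, $$\mathbb{E}\left[(\xi^{k+1}-\xi^* )^T(\tilde P\otimes I_p)(\xi^{k+1}-\xi^* )\right]\le\rho^2\,\mathbb{E}\left[(\xi^{k}-\xi^* )^T(\tilde P\otimes I_p)(\xi^{k}-\xi^* )\right],$$ and consequently $\mathbb{E}\|\xi^k-\xi^*\|^2\le\rho^{2k}\,\mathrm{cond}(\tilde P)\,\|\xi^0-\xi^*\|^2$ for all $k\ge1$.
   Context: $e_i$ is the $i$-th standard basis vector of $\mathbb{R}^n$, $e\in\mathbb{R}^n$ is the all-ones vector, $\tilde 0\in\mathbb{R}^n$ is the zero vector, $\otimes$ is the Kronecker product, and $M\le0$ means negative semidefinite. $\mathrm{cond}(\tilde P)$ is the condition number (ratio of largest to smallest eigenvalue) of the positive definite matrix $\tilde P$. Expectation is over the random indices $i_k$. *)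

(* Defs.v *)
From HB Require Import structures.
From mathcomp Require Import all_boot all_order all_algebra.
From mathcomp Require Import all_classical all_reals all_analysis.
From mathcomp Require Import mxtens.
Set Implicit Arguments. Unset Strict Implicit. Unset Printing Implicit Defensive.
Import Order.TTheory GRing.Theory Num.Theory.
Import numFieldNormedType.Exports.
Local Open Scope ring_scope.

Section Defs.
Variable R : realType.

Definition sqnorm {m} (v : 'cV[R]_m) : R := \sum_i v i 0 ^+ 2.

Definition qform {m} (M : 'M[R]_m) (v : 'cV[R]_m) : R := (v^T *m M *m v) 0 0.

Definition nsd {m} (M : 'M[R]_m) : Prop := forall v, qform M v <= 0.
Definition spd {m} (M : 'M[R]_m) : Prop :=
  M^T = M /\ forall v : 'cV[R]_m, v != 0 -> 0 < qform M v.

Definition cond {m} (M : 'M[R]_m) : R :=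
  sup [set a : R | eigenvalue M a] / inf [set a : R | eigenvalue M a].

Definition is_gradient {p} (f : 'cV[R]_p -> R) (gf : 'cV[R]_p -> 'cV[R]_p) : Prop :=
  forall x, differentiable f x /\
    ('d f x : 'cV[R]_p -> R) = (fun h => \sum_j gf x j 0 * h j 0).

(* Stacked gradient vector [grad f_1 (v); ...; grad f_n (v)] in R^{n p},
   indexed consistently with the Kronecker product (index (i,j) |-> i*p+j). *)
Definition stack {n p} (gr : 'I_n -> 'cV[R]_p -> 'cV[R]_p) (v : 'cV[R]_p)
  : 'cV[R]_(n * p) :=
  \col_k gr (mxtens_unindex k).1 v (mxtens_unindex k).2 0.

(* C = Ct (x) I_p, with the row dimension 1*p identified with p. *)
Definition kronC {nxi p} (Ct : 'rV[R]_nxi) : 'M[R]_(p, nxi * p) :=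
  castmx (mul1n p, erefl) (Ct *t (1%:M : 'M[R]_p)).

Definition jstep {n p nxi} (At : 'I_n -> 'M[R]_nxi) (Bt : 'I_n -> 'M[R]_(nxi, n))
  (Ct : 'rV[R]_nxi) (gr : 'I_n -> 'cV[R]_p -> 'cV[R]_p)
  (xi : 'cV[R]_(nxi * p)) (i : 'I_n) : 'cV[R]_(nxi * p) :=
  (At i *t (1%:M : 'M[R]_p)) *m xi
  + (Bt i *t (1%:M : 'M[R]_p)) *m stack gr (kronC Ct *m xi).

Definition traj {n p nxi} At Bt Ct gr (xi0 : 'cV[R]_(nxi * p)) (s : seq 'I_n) :=
  foldl (@jstep n p nxi At Bt Ct gr) xi0 s.

(* Expectation over i_0, ..., i_{k-1} IID uniform on {1..n}:
   E[h(xi^k)] = n^{-k} sum over all index sequences of length k. *)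
Definition Exp {n p nxi} At Bt Ct gr (xi0 : 'cV[R]_(nxi * p)) (k : nat)
  (h : 'cV[R]_(nxi * p) -> R) : R :=
  (n%:R ^- k) * \sum_(s : k.-tuple 'I_n) h (@traj n p nxi At Bt Ct gr xi0 s).

(* D_psi1 = [L nu L gamma ... L gamma]^T, indexed by (q, b) in (1+n) x 2. *)
Definition Dpsi1 {n} (L nu gam : R) : 'cV[R]_((1 + n) * 2) :=
  \col_k (let qb := mxtens_unindex k in
          if qb.2 == 0 then L else if qb.1 == 0 then nu else gam).

(* D_psi2 = [-e/n  e/n  -e_1  e_1 ... -e_n  e_n]^T. *)
Definition Dpsi2 {n} : 'M[R]_((1 + n) * 2, n) :=
  \matrix_(k, j) (let qb := mxtens_unindex k in
     (if qb.2 == 0 then -1 else 1) *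
     (if qb.1 == 0 :> nat then n%:R^-1 else ((qb.1 : nat) == j.+1)%:R)).

Definition Mpsi {n} (l1 l2 : R) : 'M[R]_((1 + n) * 2) :=
  (block_mx (l1%:M : 'M[R]_(1)) 0 0 ((l2 / n%:R)%:M : 'M[R]_(n)))
    *t (\matrix_(i < 2, j < 2) (i != j)%:R).

Definition avg {n m1 m2} (F : 'I_n -> 'M[R]_(m1, m2)) : 'M[R]_(m1, m2) :=
  n%:R^-1 *: \sum_i F i.

Definition LMI {n nxi} (At : 'I_n -> 'M[R]_nxi) (Bt : 'I_n -> 'M[R]_(nxi, n))
  (Ct : 'rV[R]_nxi) (P : 'M[R]_nxi) (rho L nu gam l1 l2 : R) : 'M[R]_(nxi + n) :=
  block_mx (avg (fun i => (At i)^T *m P *m At i) - rho ^+ 2 *: P)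
           (avg (fun i => (At i)^T *m P *m Bt i))
           (avg (fun i => (Bt i)^T *m P *m At i))
           (avg (fun i => (Bt i)^T *m P *m Bt i))
  + (row_mx (Dpsi1 L nu gam *m Ct) Dpsi2)^T *m Mpsi l1 l2
      *m row_mx (Dpsi1 L nu gam *m Ct) Dpsi2.

Definition sector_qf {p} (L c : R) (dx du : 'cV[R]_p) : R :=
  qform (block_mx ((2 * L * c)%:M) ((L - c)%:M) ((L - c)%:M) ((-2)%:M) : 'M[R]_(p + p))
        (col_mx dx du).

End Defs.

(* Main.v *)
Require Import Defs.
From HB Require Import structures.
From mathcomp Require Import all_boot all_order all_algebra.
From mathcomp Require Import all_classical all_reals all_analysis.
From mathcomp Require Import mxtens.
From mathcomp Require Import ring lra.
Import Order.TTheory GRing.Theory Num.Theory.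
Import numFieldNormedType.Exports.
Local Open Scope ring_scope.
Set Implicit Arguments. Unset Strict Implicit. Unset Printing Implicit Defensive.
Section S.
Variable R : realType.
Implicit Types (m p : nat).

Lemma sum_tens m p (F : 'I_(m * p) -> R) :
  \sum_k F k = \sum_a \sum_j F (mxtens_index (a, j)).
Proof.
rewrite pair_big /=.
rewrite (reindex (@mxtens_index m p)) /=; last first.
  by exists (@mxtens_unindex m p) => x _; rewrite (mxtens_indexK, mxtens_unindexK).
by apply: eq_bigr => -[a j].
Qed.

Lemma qformE m (M : 'M[R]_m) v :
  qform M v = \sum_a \sum_b v a 0 * M a b * v b 0.
Proof.
rewrite /qform mxE; rewrite exchange_big /=; apply: eq_bigr => b _.
rewrite !mxE big_distrl /=; apply: eq_bigr => a _; rewrite !mxE.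
by [].
Qed.
Definition slice m p (x : 'cV[R]_(m * p)) (j : 'I_p) : 'cV[R]_m :=
  \col_a x (mxtens_index (a, j)) 0.

Lemma sliceD m p (x y : 'cV[R]_(m * p)) j : slice (x + y) j = slice x j + slice y j.
Proof. by apply/matrixP => a b; rewrite !mxE. Qed.
Lemma sliceB m p (x y : 'cV[R]_(m * p)) j : slice (x - y) j = slice x j - slice y j.
Proof. by apply/matrixP => a b; rewrite !mxE. Qed.

Lemma qform_tens m p (M : 'M[R]_m) (x : 'cV[R]_(m * p)) :
  qform (M *t (1%:M : 'M[R]_p)) x = \sum_j qform M (slice x j).
Proof.
rewrite qformE sum_tens.
under eq_bigr => a _ do under eq_bigr => j _ do rewrite sum_tens.
rewrite exchange_big /=; apply: eq_bigr => j _.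
rewrite qformE; apply: eq_bigr => a _.
apply: eq_bigr => b _.
rewrite (bigD1 j) //= big1 ?addr0; last first.
  by move=> k /negPf hk; rewrite tensmxE !mxE eq_sym hk /= !(mulr0, mul0r).
by rewrite tensmxE !mxE eqxx mulr1.
Qed.

Lemma sqnorm_tens m p (x : 'cV[R]_(m * p)) :
  sqnorm x = \sum_j sqnorm (slice x j).
Proof.
rewrite /sqnorm sum_tens exchange_big /=; apply: eq_bigr => j _.
by apply: eq_bigr => a _; rewrite mxE.
Qed.

Lemma slice_mul m q p (M : 'M[R]_(m, q)) (x : 'cV[R]_(q * p)) j :
  slice ((M *t (1%:M : 'M[R]_p)) *m x) j = M *m slice x j.
Proof.
apply/matrixP => a c; rewrite !mxE sum_tens; apply: eq_bigr => b _.
rewrite (bigD1 j) //= big1 ?addr0; last first.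
  by move=> k /negPf hk; rewrite tensmxE !mxE eq_sym hk /= !(mulr0, mul0r).
by rewrite tensmxE /slice !mxE eqxx mulr1.
Qed.

Lemma kronC_mul nxi p (Ct : 'rV[R]_nxi) (x : 'cV[R]_(nxi * p)) j :
  (kronC Ct *m x) j 0 = (Ct *m slice x j) 0 0.
Proof.
rewrite !mxE sum_tens; apply: eq_bigr => b _.
rewrite (bigD1 j) //= big1 ?addr0; last first.
  move=> k /negPf hk; rewrite castmxE /=.
  have -> : cast_ord (esym (mul1n p)) j = mxtens_index (0 : 'I_1, j).
    by apply: val_inj; rewrite /= mul0n.
  by rewrite cast_ord_id tensmxE !mxE eq_sym hk /= !(mulr0, mul0r).
rewrite /kronC castmxE /=.
have -> : cast_ord (esym (mul1n p)) j = mxtens_index (0 : 'I_1, j).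
  by apply: val_inj; rewrite /= mul0n.
by rewrite cast_ord_id tensmxE /slice !mxE eqxx mulr1.
Qed.

Lemma slice_stack n p (gr : 'I_n -> 'cV[R]_p -> 'cV[R]_p) v j :
  slice (stack gr v) j = \col_i gr i v j 0.
Proof. by apply/matrixP => a b; rewrite !mxE mxtens_indexK. Qed.

Definition bil a b (M : 'M[R]_(a, b)) (x : 'cV[R]_a) (y : 'cV[R]_b) : R :=
  (x^T *m M *m y) 0 0.

Lemma qform_bil a (M : 'M[R]_a) v : qform M v = bil M v v.
Proof. by []. Qed.

Lemma bilD a b (M N : 'M[R]_(a, b)) x y : bil (M + N) x y = bil M x y + bil N x y.
Proof. by rewrite /bil mulmxDr mulmxDl mxE. Qed.

Lemma bilN a b (M : 'M[R]_(a, b)) x y : bil (- M) x y = - bil M x y.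
Proof. by rewrite /bil mulmxN mulNmx mxE. Qed.

Lemma bilZ a b c (M : 'M[R]_(a, b)) x y : bil (c *: M) x y = c * bil M x y.
Proof. by rewrite /bil -scalemxAr -scalemxAl mxE. Qed.

Lemma bil_sum a b (I : finType) (F : I -> 'M[R]_(a, b)) x y :
  bil (\sum_i F i) x y = \sum_i bil (F i) x y.
Proof. by rewrite /bil mulmx_sumr mulmx_suml summxE. Qed.

Lemma bil_avg n a b (F : 'I_n -> 'M[R]_(a, b)) x y :
  bil (avg F) x y = n%:R^-1 * \sum_i bil (F i) x y.
Proof. by rewrite /avg bilZ bil_sum. Qed.

Lemma bil_tr a b c (A : 'M[R]_(a, b)) (P : 'M[R]_a) (B : 'M[R]_(a, c)) x y :
  bil (A^T *m P *m B) x y = bil P (A *m x) (B *m y).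
Proof. by rewrite /bil trmx_mul !mulmxA. Qed.

Lemma bilDl a b (M : 'M[R]_(a, b)) x1 x2 y : bil M (x1 + x2) y = bil M x1 y + bil M x2 y.
Proof. by rewrite /bil linearD /= !mulmxDl mxE. Qed.

Lemma bilDr a b (M : 'M[R]_(a, b)) x y1 y2 : bil M x (y1 + y2) = bil M x y1 + bil M x y2.
Proof. by rewrite /bil !mulmxDr mxE. Qed.

Lemma qform_add a (P : 'M[R]_a) u v :
  qform P (u + v) = qform P u + bil P u v + bil P v u + qform P v.
Proof. by rewrite !qform_bil bilDl !bilDr !addrA. Qed.

Lemma qformD a (M N : 'M[R]_a) v : qform (M + N) v = qform M v + qform N v.
Proof. exact: bilD. Qed.

Lemma qform_conj a b (Z : 'M[R]_(a, b)) (M : 'M[R]_a) v :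
  qform (Z^T *m M *m Z) v = qform M (Z *m v).
Proof. exact: bil_tr. Qed.

Lemma qform_block a b (X : 'M[R]_a) (Y : 'M[R]_(a, b)) (Z : 'M[R]_(b, a))
  (W : 'M[R]_b) e u :
  qform (block_mx X Y Z W) (col_mx e u) = qform X e + bil Y e u + bil Z u e + qform W u.
Proof.
rewrite /qform /bil tr_col_mx mul_row_block mul_row_col !mulmxDl !mxE.
by rewrite !addrA; congr (_ + _); rewrite -!addrA; congr (_ + _); rewrite addrC.
Qed.

Lemma lmi_col n nxi (At : 'I_n -> 'M[R]_nxi) (Bt : 'I_n -> 'M[R]_(nxi, n))
  (Ct : 'rV[R]_nxi) (P : 'M[R]_nxi) (rho L nu gam l1 l2 : R)
  (h : nsd (LMI At Bt Ct P rho L nu gam l1 l2)) e u :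
  n%:R^-1 * \sum_i qform P (At i *m e + Bt i *m u) <=
  rho ^+ 2 * qform P e - qform (@Mpsi R n l1 l2) (@Dpsi1 R n L nu gam *m Ct *m e + @Dpsi2 R n *m u).
Proof.
have := h (col_mx e u).
rewrite /LMI qformD qform_conj mul_row_col qform_block.
rewrite !qform_bil bilD bilN bilZ !bil_avg.
move=> H.
have -> : \sum_i qform P (At i *m e + Bt i *m u) =
  \sum_i bil ((At i)^T *m P *m At i) e e + \sum_i bil ((At i)^T *m P *m Bt i) e u +
  \sum_i bil ((Bt i)^T *m P *m At i) u e + \sum_i bil ((Bt i)^T *m P *m Bt i) u u.
  by rewrite -!big_split; apply: eq_bigr => i _; rewrite !bil_tr qform_add.
rewrite !mulrDr; lra.
Qed.

Lemma qform_tensE a b (M : 'M[R]_a) (N : 'M[R]_b) (y : 'cV[R]_(a * b)) :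
  qform (M *t N) y = \sum_q \sum_q' M q q' *
     (\sum_c \sum_c' y (mxtens_index (q, c)) 0 * N c c' * y (mxtens_index (q', c')) 0).
Proof.
rewrite qformE sum_tens; apply: eq_bigr => q _.
under eq_bigr => c _ do rewrite sum_tens.
rewrite exchange_big /=; apply: eq_bigr => q' _.
rewrite big_distrr /=; apply: eq_bigr => c _.
rewrite big_distrr /=; apply: eq_bigr => c' _.
rewrite tensmxE; ring.
Qed.

Definition o0 : 'I_2 := @Ordinal 2 0 isT.
Definition o1 : 'I_2 := @Ordinal 2 1 isT.

Lemma sum_I2 (F : 'I_2 -> R) : \sum_i F i = F o0 + F o1.
Proof.
rewrite !big_ord_recl big_ord0 addr0; congr (F _ + F _); exact: val_inj.
Qed.

Lemma qform_Mpsi n l1 l2 (y : 'cV[R]_((1 + n) * 2)) :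
  qform (@Mpsi R n l1 l2) y =
  2 * l1 * (y (mxtens_index (lshift n (ord0 : 'I_1), o0)) 0 *
            y (mxtens_index (lshift n (ord0 : 'I_1), o1)) 0)
  + 2 * (l2 / n%:R) * \sum_i (y (mxtens_index (rshift 1 i, o0)) 0 *
                              y (mxtens_index (rshift 1 i, o1)) 0).
Proof.
rewrite /Mpsi qform_tensE big_split_ord /=; congr (_ + _).
  rewrite big_ord1 big_split_ord /= [X in X + _]big_ord1 [X in _ + X]big1 ?addr0; last first.
    by move=> i _; rewrite block_mxEur mxE mul0r.
  rewrite block_mxEul !mxE !sum_I2 !mxE /=; ring.
rewrite big_distrr /=; apply: eq_bigr => i _.
rewrite big_split_ord /= [X in X + _]big_ord1 block_mxEdl mxE mul0r add0r.
rewrite (bigD1 i) //= [X in _ + X]big1 ?addr0; last first.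
  by move=> k /negPf hk; rewrite block_mxEdr !mxE eq_sym hk /= !(mulr0, mul0r).
rewrite block_mxEdr !mxE eqxx !sum_I2 !mxE /=; ring.
Qed.

Lemma y_entry n nxi (L nu gam : R) (Ct : 'rV[R]_nxi) (e : 'cV[R]_nxi) (u : 'cV[R]_n) k :
  (@Dpsi1 R n L nu gam *m Ct *m e + @Dpsi2 R n *m u) k 0 =
  @Dpsi1 R n L nu gam k 0 * (Ct *m e) 0 0 + \sum_i @Dpsi2 R n k i * u i 0.
Proof. by rewrite -mulmxA mxE [X in X + _]mxE big_ord1 [X in _ + X]mxE. Qed.

Section DE.
Variables (n : nat) (L nu gam : R).
Lemma D1_00 : @Dpsi1 R n L nu gam (mxtens_index (lshift n (ord0 : 'I_1), o0)) 0 = L.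
Proof. by rewrite /Dpsi1 mxE mxtens_indexK. Qed.
Lemma D1_01 : @Dpsi1 R n L nu gam (mxtens_index (lshift n (ord0 : 'I_1), o1)) 0 = nu.
Proof. by rewrite /Dpsi1 mxE mxtens_indexK. Qed.
Lemma D1_i0 i : @Dpsi1 R n L nu gam (mxtens_index (rshift 1 i, o0)) 0 = L.
Proof. by rewrite /Dpsi1 mxE mxtens_indexK. Qed.
Lemma D1_i1 i : @Dpsi1 R n L nu gam (mxtens_index (rshift 1 i, o1)) 0 = gam.
Proof. by rewrite /Dpsi1 mxE mxtens_indexK. Qed.
Lemma D2_00 j : @Dpsi2 R n (mxtens_index (lshift n (ord0 : 'I_1), o0)) j = - n%:R^-1.
Proof. by rewrite /Dpsi2 mxE mxtens_indexK /= mulN1r. Qed.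
Lemma D2_01 j : @Dpsi2 R n (mxtens_index (lshift n (ord0 : 'I_1), o1)) j = n%:R^-1.
Proof. by rewrite /Dpsi2 mxE mxtens_indexK /= mul1r. Qed.
Lemma D2_i0 i j : @Dpsi2 R n (mxtens_index (rshift 1 i, o0)) j = - (i == j)%:R.
Proof. by rewrite /Dpsi2 mxE mxtens_indexK /= mulN1r. Qed.
Lemma D2_i1 i j : @Dpsi2 R n (mxtens_index (rshift 1 i, o1)) j = (i == j)%:R.
Proof. by rewrite /Dpsi2 mxE mxtens_indexK /= mul1r. Qed.
End DE.

Lemma sD2_i0 n i (u : 'cV[R]_n) :
  \sum_k @Dpsi2 R n (mxtens_index (rshift 1 i, o0)) k * u k 0 = - u i 0.
Proof.
rewrite (bigD1 i) //= big1 ?addr0; last first.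
  by move=> k /negPf hk; rewrite D2_i0 eq_sym hk /= oppr0 mul0r.
by rewrite D2_i0 eqxx /= mulN1r.
Qed.

Lemma sD2_i1 n i (u : 'cV[R]_n) :
  \sum_k @Dpsi2 R n (mxtens_index (rshift 1 i, o1)) k * u k 0 = u i 0.
Proof.
rewrite (bigD1 i) //= big1 ?addr0; last first.
  by move=> k /negPf hk; rewrite D2_i1 eq_sym hk /= mul0r.
by rewrite D2_i1 eqxx /= mul1r.
Qed.

Lemma qform_Mpsi_y n nxi (L nu gam l1 l2 : R) (Ct : 'rV[R]_nxi) (e : 'cV[R]_nxi)
  (u : 'cV[R]_n) :
  qform (@Mpsi R n l1 l2) (@Dpsi1 R n L nu gam *m Ct *m e + @Dpsi2 R n *m u) =
  2 * l1 * ((L * (Ct *m e) 0 0 - n%:R^-1 * \sum_i u i 0) *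
            (nu * (Ct *m e) 0 0 + n%:R^-1 * \sum_i u i 0))
  + 2 * (l2 / n%:R) * \sum_i ((L * (Ct *m e) 0 0 - u i 0) * (gam * (Ct *m e) 0 0 + u i 0)).
Proof.
rewrite qform_Mpsi !y_entry D1_00 D1_01.
under eq_bigr => i _ do rewrite D2_00.
under [X in _ * (_ * (_ + X))]eq_bigr => i _ do rewrite D2_01.
have -> : \sum_i - n%:R^-1 * u i 0 = - (n%:R^-1 * \sum_i u i 0).
  by rewrite mulr_sumr -sumrN; apply: eq_bigr => i _; rewrite mulNr.
rewrite -mulr_sumr.
congr (_ + _ * _); apply: eq_bigr => i _; rewrite !y_entry D1_i0 D1_i1.
by rewrite sD2_i0 sD2_i1.
Qed.

Lemma bil_scalar p (a : R) (x y : 'cV[R]_p) :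
  bil (a%:M) x y = a * \sum_j x j 0 * y j 0.
Proof.
rewrite /bil mul_mx_scalar -scalemxAl mxE; congr (_ * _).
by rewrite mxE; apply: eq_bigr => j _; rewrite mxE.
Qed.

Lemma sector_E p (L c : R) (dx du : 'cV[R]_p) :
  sector_qf L c dx du = 2 * \sum_j (L * dx j 0 - du j 0) * (c * dx j 0 + du j 0).
Proof.
rewrite /sector_qf qform_block !qform_bil !bil_scalar !mulr_sumr -!big_split /=.
by apply: eq_bigr => j _; ring.
Qed.

Lemma one_step (n p nxi : nat)
  (gr : 'I_n -> 'cV[R]_p -> 'cV[R]_p) (xs : 'cV[R]_p)
  (At : 'I_n -> 'M[R]_nxi) (Bt : 'I_n -> 'M[R]_(nxi, n)) (Ct : 'rV[R]_nxi)
  (xis : 'cV[R]_(nxi * p))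
  (hxis : forall i, xis = (At i *t (1%:M : 'M[R]_p)) *m xis
                          + (Bt i *t (1%:M : 'M[R]_p)) *m stack gr xs)
  (hCxis : kronC Ct *m xis = xs)
  (nu gam L : R)
  (hsec1 : forall x, 0 <= sector_qf L nu (x - xs)
             (n%:R^-1 *: \sum_j gr j x - n%:R^-1 *: \sum_j gr j xs))
  (hsec2 : forall x i, 0 <= sector_qf L gam (x - xs) (gr i x - gr i xs))
  (rho : R) (P : 'M[R]_nxi) (l1 l2 : R)
  (hl1 : 0 <= l1) (hl2 : 0 <= l2)
  (hLMI : nsd (LMI At Bt Ct P rho L nu gam l1 l2)) (xi : 'cV[R]_(nxi * p)) :
  n%:R^-1 * \sum_i qform (P *t (1%:M : 'M[R]_p)) (jstep At Bt Ct gr xi i - xis)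
  <= rho ^+ 2 * qform (P *t (1%:M : 'M[R]_p)) (xi - xis).
Proof.
set v := kronC Ct *m xi.
set e := xi - xis.
set U := stack gr v - stack gr xs.
have hstep i : jstep At Bt Ct gr xi i - xis =
    (At i *t (1%:M : 'M[R]_p)) *m e + (Bt i *t (1%:M : 'M[R]_p)) *m U.
  by rewrite /jstep {1}(hxis i) /e /U !mulmxBr -/v opprD addrACA.
under eq_bigr => i _ do rewrite hstep qform_tens.
rewrite exchange_big /= mulr_sumr qform_tens mulr_sumr.
set Y := fun j : 'I_p => @Dpsi1 R n L nu gam *m Ct *m slice e j + @Dpsi2 R n *m slice U j.
apply: (@le_trans _ _ (\sum_j (rho ^+ 2 * qform P (slice e j) - qform (@Mpsi R n l1 l2) (Y j)))).
  apply: ler_sum => j _.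
  under eq_bigr => i _ do rewrite sliceD !slice_mul.
  exact: lmi_col.
rewrite sumrB lerBlDr lerDl.
have hd j : (Ct *m slice e j) 0 0 = (v - xs) j 0.
  by rewrite -kronC_mul /e mulmxBr -/v hCxis.
have hu j i : slice U j i 0 = (gr i v - gr i xs) j 0.
  by rewrite /U sliceB !slice_stack !mxE.
have hg j : n%:R^-1 * \sum_i slice U j i 0 =
    (n%:R^-1 *: \sum_j gr j v - n%:R^-1 *: \sum_j gr j xs) j 0.
  rewrite !mxE !summxE -mulrBr -sumrB; congr (_ * _); apply: eq_bigr => i _.
  by rewrite hu !mxE.
have -> : \sum_j qform (@Mpsi R n l1 l2) (Y j) =
   l1 * sector_qf L nu (v - xs)
          (n%:R^-1 *: \sum_j gr j v - n%:R^-1 *: \sum_j gr j xs)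
   + (l2 / n%:R) * \sum_i sector_qf L gam (v - xs) (gr i v - gr i xs).
  rewrite sector_E; under [X in _ = _ + _ * X]eq_bigr => i _ do rewrite sector_E.

  rewrite /Y /=.
  under eq_bigr => j _ do rewrite qform_Mpsi_y hd hg.
  rewrite big_split /=; congr (_ + _).
    by rewrite mulr_sumr mulr_sumr; apply: eq_bigr => j _; ring.
  rewrite -mulr_sumr -[X in _ = _ * X]mulr_sumr exchange_big /=.
  rewrite [in RHS]mulrA [in RHS](mulrC (l2 / _)).
  congr (_ * _); apply: eq_bigr => i _; apply: eq_bigr => j _; by rewrite hu.
apply: addr_ge0; first exact: mulr_ge0.
apply: mulr_ge0; first by apply: divr_ge0.
by apply: sumr_ge0 => i _.
Qed.

Section ExpS.
Variables (n p nxi : nat) (At : 'I_n -> 'M[R]_nxi) (Bt : 'I_n -> 'M[R]_(nxi, n))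
  (Ct : 'rV[R]_nxi) (gr : 'I_n -> 'cV[R]_p -> 'cV[R]_p).

Lemma Exp0 xi0 h : Exp At Bt Ct gr xi0 0 h = h xi0.
Proof.
rewrite /Exp expr0 invr1 mul1r.
rewrite (eq_bigr (fun _ => h xi0)); last by move=> s _; rewrite (tuple0 s).
by rewrite sumr_const card_tuple expn0.
Qed.

Lemma Exp_S xi0 k h : Exp At Bt Ct gr xi0 k.+1 h =
  n%:R^-1 * \sum_i Exp At Bt Ct gr (jstep At Bt Ct gr xi0 i) k h.
Proof.
rewrite /Exp exprS invfM -mulrA; congr (_ * _).
rewrite -mulr_sumr; congr (_ * _).
rewrite pair_big /=.
rewrite (reindex (fun q : 'I_n * k.-tuple 'I_n => [tuple of q.1 :: q.2])) /=; last first.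
  exists (fun t : k.+1.-tuple 'I_n => (thead t, [tuple of behead t])).
    by move=> [i s] _ /=; congr (_, _); apply: val_inj.
  by move=> t _; apply: val_inj => /=; rewrite [in RHS](tuple_eta t).
by apply: eq_bigr => -[i s] _.
Qed.

Lemma Exp_le k xi0 h1 h2 : (forall x, h1 x <= h2 x) ->
  Exp At Bt Ct gr xi0 k h1 <= Exp At Bt Ct gr xi0 k h2.
Proof.
move=> hh; rewrite /Exp ler_wpM2l ?invr_ge0 ?exprn_ge0 ?ler0n //.
by apply: ler_sum => s _; apply: hh.
Qed.

Lemma ExpZ k xi0 c h :
  Exp At Bt Ct gr xi0 k (fun x => c * h x) = c * Exp At Bt Ct gr xi0 k h.
Proof. by rewrite /Exp -mulr_sumr mulrCA. Qed.
End ExpS.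

Lemma qform_row m (P : 'M[R]_m) (r : 'rV[R]_m) :
  qform P r^T = \sum_a \sum_b r 0 a * P a b * r 0 b.
Proof. by rewrite qformE; apply: eq_bigr => a _; apply: eq_bigr => b _; rewrite !mxE. Qed.

Lemma sqnorm_row m (r : 'rV[R]_m) : sqnorm r^T = \sum_a r 0 a ^+ 2.
Proof. by apply: eq_bigr => a _; rewrite mxE. Qed.

Lemma continuous_sumR (T : topologicalType) (I : finType) (F : I -> T -> R) :
  (forall i, continuous (F i)) -> continuous (fun x => \sum_i F i x).
Proof.
move=> hF; apply: (@continuous_big R^o I +%R 0 xpredT _ _ (index_enum I) F) => //.
exact: add_continuous.
Qed.

Local Open Scope classical_set_scope.
Local Open Scope ring_scope.
Lemma rayleigh_min_exists m (P : 'M[R]_m) : (0 < m)%N ->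
  exists2 r : 'rV[R]_m, sqnorm r^T = 1 &
    forall r' : 'rV[R]_m, sqnorm r'^T = 1 -> qform P r^T <= qform P r'^T.
Proof.
move=> hm.
pose f2 := fun r : 'rV[R]_m => \sum_a r 0 a ^+ 2.
pose f := fun r : 'rV[R]_m => \sum_a \sum_b r 0 a * P a b * r 0 b.
have cf2 : continuous f2.
  apply: continuous_sumR => a x.
  by apply: (@continuousM _ _ (fun r : 'rV[R]_m => r 0 a) (fun r : 'rV[R]_m => r 0 a)); apply: coord_continuous.
have cf : continuous f.
  apply: continuous_sumR => a; apply: continuous_sumR => b.
  move=> x; apply: (@continuousM _ _ (fun r : 'rV[R]_m => r 0 a * P a b) (fun r : 'rV[R]_m => r 0 b)); last exact: coord_continuous.
  apply: (@continuousM _ _ (fun r : 'rV[R]_m => r 0 a) (fun=> P a b)); first exact: coord_continuous.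
  exact: cst_continuous.
pose A := [set r : 'rV[R]_m | f2 r = 1].
have A0 : A !=set0.
  exists (delta_mx 0 (Ordinal hm)); rewrite /A /f2 /=.
  rewrite (bigD1 (Ordinal hm)) //= big1 ?addr0; last first.
    by move=> k /negPf hk; rewrite mxE hk andbF /= expr0n.
  by rewrite mxE !eqxx /= expr1n.
have cA : compact A.
  apply: bounded_closed_compact.
    exists 1; split; first exact: num_real.
    move=> M hM r Ar; apply: (le_trans _ (ltW hM)).
    rewrite (_ : `|r| = mx_norm r) // mx_normrE; apply: bigmax_le => // -[i j] _ /=.
    rewrite [i]ord1 ler_norml.
    have : r 0 j ^+ 2 <= 1.
      rewrite -Ar /f2 (bigD1 j) //= lerDl; apply: sumr_ge0 => k _; exact: sqr_ge0.
    move=> h; apply/andP; split; nra.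
  apply: (@preimage_closed _ _ f2 [set 1]); [move=> x _; exact: cf2 | exact: closed_eq].
have [c cA' cmin] := EVT_min_rV A0 cA (continuous_subspaceT cf).
exists c.
  by rewrite sqnorm_row; move: cA'; rewrite inE.
move=> r' hr'; rewrite !qform_row; apply: cmin; rewrite inE /A /=.
by rewrite /f2 -sqnorm_row.
Qed.

Lemma sqnormZ m (a : R) (v : 'cV[R]_m) : sqnorm (a *: v) = a ^+ 2 * sqnorm v.
Proof. by rewrite /sqnorm mulr_sumr; apply: eq_bigr => i _; rewrite mxE exprMn. Qed.

Lemma qformZ m (P : 'M[R]_m) (a : R) (v : 'cV[R]_m) : qform P (a *: v) = a ^+ 2 * qform P v.
Proof.
by rewrite /qform [(a *: v)^T]linearZ /= -scalemxAl -scalemxAr -scalemxAl !mxE mulrA expr2.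
Qed.

Lemma qformN m (M : 'M[R]_m) v : qform (- M) v = - qform M v.
Proof. exact: bilN. Qed.

Lemma bilZl a b (M : 'M[R]_(a, b)) (c : R) x y : bil M (c *: x) y = c * bil M x y.
Proof. by rewrite /bil [(c *: x)^T]linearZ /= -!scalemxAl mxE. Qed.

Lemma bilZr a b (M : 'M[R]_(a, b)) (c : R) x y : bil M x (c *: y) = c * bil M x y.
Proof. by rewrite /bil -scalemxAr mxE. Qed.

Lemma sqnorm0 m : sqnorm (0 : 'cV[R]_m) = 0.
Proof. by rewrite /sqnorm big1 // => i _; rewrite mxE expr0n. Qed.

Lemma sqnorm_ge0 m (v : 'cV[R]_m) : 0 <= sqnorm v.
Proof. by apply: sumr_ge0 => i _; exact: sqr_ge0. Qed.

Lemma sqnorm_eq0 m (v : 'cV[R]_m) : sqnorm v = 0 -> v = 0.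
Proof.
move=> h; apply/matrixP => i j; rewrite [j]ord1 mxE.
have /psumr_eq0P h2 := h.
by apply/eqP; rewrite -sqrf_eq0; apply/eqP; apply: h2 => // k _; exact: sqr_ge0.
Qed.

Lemma sqnorm_bil m (v : 'cV[R]_m) : sqnorm v = (v^T *m v) 0 0.
Proof. by rewrite mxE; apply: eq_bigr => i _; rewrite mxE expr2. Qed.

Lemma qform_scalar m (a : R) (v : 'cV[R]_m) : qform (a%:M) v = a * sqnorm v.
Proof. by rewrite qform_bil bil_scalar; congr (_ * _); apply: eq_bigr => i _; rewrite expr2. Qed.

Lemma bil_sym m (M : 'M[R]_m) x y : M^T = M -> bil M x y = bil M y x.
Proof.
move=> hM; rewrite /bil -[in LHS](trmxK (x^T *m M *m y)) mxE.
by rewrite !trmx_mul trmxK hM mulmxA.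
Qed.

Lemma min_eig m (P : 'M[R]_m) : (0 < m)%N -> P^T = P ->
  exists mu, eigenvalue P mu /\ forall v, mu * sqnorm v <= qform P v.
Proof.
move=> hm hsym.
have [c c1 cmin] := rayleigh_min_exists P hm.
set mu := qform P c^T.
have hb : forall v, mu * sqnorm v <= qform P v.
  move=> v; have [->|v0] := eqVneq v 0.
    by rewrite sqnorm0 mulr0 /qform trmx0 !mul0mx mxE.
  have sp : 0 < sqnorm v.
    rewrite lt_neqAle sqnorm_ge0 andbT; apply/negP => /eqP h.
    by move: v0; rewrite (sqnorm_eq0 (esym h)) eqxx.
  set t := Num.sqrt (sqnorm v).
  have tp : 0 < t by rewrite sqrtr_gt0.
  have := cmin ((t^-1 *: v)^T); rewrite trmxK sqnormZ qformZ exprVn sqr_sqrtr ?(ltW sp) //.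
  rewrite mulVf ?gt_eqF // => /(_ erefl) h.
  by rewrite -ler_pdivlMr // mulrC.
exists mu; split=> //.
set x0 := c^T.
set Q := P - mu%:M.
have hQ v : 0 <= qform Q v.
  by rewrite /Q qformD qformN qform_scalar subr_ge0.
have hQ0 : qform Q x0 = 0.
  by rewrite /Q qformD qformN qform_scalar /x0 c1 mulr1 subrr.
have Qsym : Q^T = Q by rewrite /Q linearB /= hsym tr_scalar_mx.
set z := Q *m x0.
have hz : z = 0.
  apply: sqnorm_eq0.
  set b := sqnorm z; set cc := qform Q z.
  have bz : bil Q z x0 = b by rewrite /bil /b sqnorm_bil -mulmxA.
  have b0 : 0 <= b by exact: sqnorm_ge0.
  have c0 : 0 <= cc by exact: hQ.
  set t := - b / (cc + 1).
  have e : t * (cc + 1) = - b by rewrite /t mulfVK // gt_eqF // ltr_pwDr.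
  have := hQ (x0 + t *: z).
  rewrite qform_add hQ0 qformZ bilZl bilZr (bil_sym x0 z Qsym) bz -/cc => h.
  have h2 : 0 <= (0 + t * b + t * b + t ^+ 2 * cc) * (cc + 1) ^+ 2.
    by apply: mulr_ge0 => //; exact: sqr_ge0.
  have h2' : 0 <= 2 * b * (cc + 1) * (t * (cc + 1)) + cc * (t * (cc + 1)) ^+ 2.
    have -> : 2 * b * (cc + 1) * (t * (cc + 1)) + cc * (t * (cc + 1)) ^+ 2 =
      (0 + t * b + t * b + t ^+ 2 * cc) * (cc + 1) ^+ 2 by ring.
    exact: h2.
  rewrite e in h2'.
  have h3 : b ^+ 2 * (cc + 2) <= 0.
    have -> : b ^+ 2 * (cc + 2) = - (2 * b * (cc + 1) * (- b) + cc * (- b) ^+ 2) by ring.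
    by rewrite oppr_le0.
  have : b ^+ 2 <= 0.
    have c2 : 0 < cc + 2 by apply: (lt_le_trans (ltr0n _ 2)); rewrite lerDr.
    by rewrite -(pmulr_lle0 _ c2).
  by move=> h4; apply/eqP; rewrite -sqrf_eq0 eq_le h4 sqr_ge0.
apply/eigenvalueP; exists c.
  have : P *m x0 = mu *: x0.
    by apply/eqP; rewrite -subr_eq0 -mul_scalar_mx -mulmxBl; apply/eqP.
  move/(congr1 trmx); rewrite trmx_mul hsym /x0 trmxK linearZ /= trmxK.
  done.
apply/negP => /eqP c00; move: c1; rewrite c00 trmx0 /sqnorm big1 => [/eqP|i _].
  by rewrite eq_sym oner_eq0.
by rewrite mxE expr0n.
Qed.

Lemma eig_qform m (P : 'M[R]_m) (w : 'rV[R]_m) a :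
  w *m P = a *: w -> qform P w^T = a * sqnorm w^T.
Proof. by move=> hw; rewrite /qform trmxK hw -scalemxAl mxE sqnorm_bil trmxK. Qed.

Lemma sqnorm_gt0 m (v : 'cV[R]_m) : v != 0 -> 0 < sqnorm v.
Proof.
move=> v0; rewrite lt_neqAle sqnorm_ge0 andbT; apply/negP => /eqP h.
by move: v0; rewrite (sqnorm_eq0 (esym h)) eqxx.
Qed.

Local Open Scope classical_set_scope.
Local Open Scope ring_scope.

Lemma cond_bound m (P : 'M[R]_m) : (0 < m)%N -> spd P ->
  exists mn mx, [/\ 0 < mn, cond P = mx / mn,
    (forall v, mn * sqnorm v <= qform P v) &
    (forall v, qform P v <= mx * sqnorm v)].
Proof.
move=> hm [hsym hpos].
have [mn [emn hmn]] := min_eig hm hsym.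
have hsymN : (- P)^T = - P by rewrite linearN /= hsym.
have [mx' [emx hmx]] := min_eig hm hsymN.
have emx2 : eigenvalue P (- mx').
  apply/eigenvalueP; move/eigenvalueP: emx => [w hw w0]; exists w => //.
  by rewrite scaleNr -hw mulmxN opprK.
have hmx2 v : qform P v <= - mx' * sqnorm v.
  by rewrite mulNr -lerN2 opprK -qformN.
have eig_range a : eigenvalue P a -> mn <= a /\ a <= - mx'.
  move/eigenvalueP => [w hw w0].
  have wT0 : w^T != 0 by rewrite trmx_eq0.
  have sp := sqnorm_gt0 wT0.
  have hq := eig_qform hw.
  split.
    by rewrite -(ler_pM2r sp) -hq.
  by rewrite -(ler_pM2r sp) -hq.
have mn0 : 0 < mn.
  move/eigenvalueP: (emn) => [w hw w0].
  have wT0 : w^T != 0 by rewrite trmx_eq0.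
  have := hpos _ wT0; rewrite (eig_qform hw).
  by rewrite pmulr_lgt0 // sqnorm_gt0.
exists mn, (- mx'); split => //.
rewrite /cond; congr (_ / _).
  apply/eqP; rewrite eq_le; apply/andP; split.
    by apply: ge_sup; [exists (- mx') | move=> a /eig_range []].
  apply: ub_le_sup => //; exists (- mx') => a /eig_range [].
  done.
apply/eqP; rewrite eq_le; apply/andP; split.
  by apply: ge_inf => //; exists mn => a /eig_range [].
by apply: lb_le_inf; [exists mn | move=> a /eig_range []].
Qed.

Lemma tens_lb m p (P : 'M[R]_m) c : (forall v, c * sqnorm v <= qform P v) ->
  forall x : 'cV[R]_(m * p), c * sqnorm x <= qform (P *t (1%:M : 'M[R]_p)) x.
Proof. by move=> h x; rewrite qform_tens sqnorm_tens mulr_sumr; apply: ler_sum. Qed.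

Lemma tens_ub m p (P : 'M[R]_m) c : (forall v, qform P v <= c * sqnorm v) ->
  forall x : 'cV[R]_(m * p), qform (P *t (1%:M : 'M[R]_p)) x <= c * sqnorm x.
Proof. by move=> h x; rewrite qform_tens sqnorm_tens mulr_sumr; apply: ler_sum. Qed.

End S.

Theorem theorem1 (R : realType) (n p nxi : nat) (hn : (0 < n)%N) (hp : (0 < p)%N)
  (hnxi : (0 < nxi)%N)
  (f : 'I_n -> 'cV[R]_p -> R) (gr : 'I_n -> 'cV[R]_p -> 'cV[R]_p)
  (hgrad : forall i, is_gradient (f i) (gr i))
  (hC1 : forall i, continuous (gr i))
  (xs : 'cV[R]_p)
  (hxs : forall x, n%:R^-1 *: \sum_i gr i x = 0 <-> x = xs)
  (At : 'I_n -> 'M[R]_nxi) (Bt : 'I_n -> 'M[R]_(nxi, n)) (Ct : 'rV[R]_nxi)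
  (xis : 'cV[R]_(nxi * p))
  (hxis : forall i, xis = (At i *t (1%:M : 'M[R]_p)) *m xis
                          + (Bt i *t (1%:M : 'M[R]_p)) *m stack gr xs)
  (hCxis : kronC Ct *m xis = xs)
  (nu gam L : R)
  (hsec1 : forall x, 0 <= sector_qf L nu (x - xs)
             (n%:R^-1 *: \sum_j gr j x - n%:R^-1 *: \sum_j gr j xs))
  (hsec2 : forall x i, 0 <= sector_qf L gam (x - xs) (gr i x - gr i xs))
  (rho : R) (P : 'M[R]_nxi) (l1 l2 : R)
  (hP : spd P) (hl1 : 0 <= l1) (hl2 : 0 <= l2)
  (hLMI : nsd (LMI At Bt Ct P rho L nu gam l1 l2)) :
  forall k : nat, (1 <= k)%N -> forall xi0 : 'cV[R]_(nxi * p),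
    Exp At Bt Ct gr xi0 k.+1 (fun xi => qform (P *t (1%:M : 'M[R]_p)) (xi - xis))
      <= rho ^+ 2 * Exp At Bt Ct gr xi0 k (fun xi => qform (P *t (1%:M : 'M[R]_p)) (xi - xis))
    /\
    Exp At Bt Ct gr xi0 k (fun xi => sqnorm (xi - xis))
      <= rho ^+ (2 * k) * cond P * sqnorm (xi0 - xis).
Proof.
move=> k _ xi0.
set V := fun xi => qform (P *t (1%:M : 'M[R]_p)) (xi - xis).
have step : forall k x0, Exp At Bt Ct gr x0 k.+1 V <= rho ^+ 2 * Exp At Bt Ct gr x0 k V.
  elim => [|j IH] x0.
    rewrite Exp_S Exp0; under eq_bigr => i _ do rewrite Exp0.
    exact: (one_step hxis hCxis hsec1 hsec2 hl1 hl2 hLMI).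
  rewrite Exp_S [Exp _ _ _ _ _ j.+1 _]Exp_S mulrCA.
  rewrite ler_wpM2l ?invr_ge0 ?ler0n // mulr_sumr.
  by apply: ler_sum => i _; exact: IH.
split; first exact: step.
have iter : forall j, Exp At Bt Ct gr xi0 j V <= rho ^+ (2 * j) * V xi0.
  elim => [|j IH]; first by rewrite Exp0 muln0 expr0 mul1r.
  apply: (le_trans (step j xi0)).
  rewrite mulnS exprD -mulrA ler_wpM2l //; exact: sqr_ge0.
have [mn [mx [mn0 -> hlb hub]]] := cond_bound hnxi hP.
apply: (@le_trans _ _ (Exp At Bt Ct gr xi0 k (fun xi => mn^-1 * V xi))).
  apply: Exp_le => x; rewrite ler_pdivlMl //; exact: tens_lb.
rewrite ExpZ.
apply: (@le_trans _ _ (mn^-1 * (rho ^+ (2 * k) * V xi0))).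
  by apply: ler_wpM2l; [rewrite invr_ge0 ltW | exact: iter].
have hV := @tens_ub R nxi p P mx hub (xi0 - xis).
have r0 : 0 <= rho ^+ (2 * k) by rewrite mulnC exprM; exact: sqr_ge0.
rewrite (_ : rho ^+ (2 * k) * (mx / mn) * sqnorm (xi0 - xis) =
  mn^-1 * (rho ^+ (2 * k) * (mx * sqnorm (xi0 - xis)))); last by ring.
apply: ler_wpM2l; first by rewrite invr_ge0 ltW.
exact: ler_wpM2l.
Qed.
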